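(* Let $\alpha^\star_n\in\mathcal D^\star_n$ for every $n$ and $\alpha^\star\in\mathcal D^\star_0$ with $\sup_{\Delta\times[0,1]^d}|\alpha^\star_n-\alpha^\star|\to0$. Then for every $j\in\{1,\dots,d\}$, $$\sup_{(s,t,u)\in\Delta\times[0,1]}\Big|\sqrt n\,\lambda_n(s,t)\{I_n(U^\star_n+n^{-1/2}\alpha^\star_{n,j})(s,t,u)-u\}+\alpha^\star_j(s,t,u)\Big|\to0.$$
   Context: $C$ is a fixed $d$-dimensional copula. $\Delta=\{(s,t)\in[0,1]^2:s\le t\}$, $\lambda_n(s,t)=(\lfloor nt\rfloor-\lfloor ns\rfloor)/n$. $\mathcal E$ is the set of right-continuous nondecreasing $F:[0,1]\to[0,1]$ with $F(0)=0$, $F(1)=1$. $\mathcal E^\star_n$ is the set of $F^\star:\Delta\times[0,1]\to[0,1]$ such that $u\mapsto\lambda_n(s,t)^{-1}F^\star(s,t,u)\in\mathcal E$ when $\lfloor ns\rfloor<\lfloor nt\rfloor$ and $F^\star(s,t,\cdot)=0$ when $\lfloor ns\rfloor=\lfloor nt\rfloor$. For $F^\star\in\mathcal E^\star_n$, $I_n(F^\star)(s,t,u)=\inf\{v\in[0,1]:F^\star(s,t,v)\ge\lambda_n(s,t)u\}$. $U^\star_n(s,t,u)=\lambda_n(s,t)u$. For $H^\star$ on $\Delta\times[0,1]^d$, $H^\star_j(s,t,u)=H^\star(s,t,\vec u_{\{j\}})$, where $\vec u_{\{j\}}$ has $j$th component $u$ and others $1$; $\mathcal E^\star_{n,d}=\{H^\star:\Delta\times[0,1]^d\to[0,1]:H^\star_j\in\mathcal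 E^\star_n\ \forall j\}$. $C^\star_n(s,t,\vec u)=\lambda_n(s,t)C(\vec u)$. $\mathcal D^\star$ is the set of bounded $\alpha^\star$ on $\Delta\times[0,1]^d$ with $\alpha^\star(s,t,\cdot)=0$ if $s=t$, and $\alpha^\star(s,t,\vec u)=0$ if $s<t$ and either some component of $\vec u$ is $0$ or $\vec u=(1,\dots,1)$. $\mathcal D^\star_n=\{\alpha^\star\in\mathcal D^\star:C^\star_n+n^{-1/2}\alpha^\star\in\mathcal E^\star_{n,d}\}$, $\mathcal D^\star_0=\mathcal D^\star\cap\mathcal C(\Delta\times[0,1]^d)$. *)

(* Defs.v *)
From HB Require Import structures.
From mathcomp Require Import all_boot all_order all_algebra.
From mathcomp Require Import boolp classical_sets reals.
Set Implicit Arguments. Unset Strict Implicit. Unset Printing Implicit Defensive.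
Import Order.TTheory GRing.Theory Num.Theory.
Local Open Scope ring_scope.
Local Open Scope classical_set_scope.

Section Defs.
Variables (R : realType) (d : nat).

Definition unit_cube (u : 'I_d -> R) : Prop := forall i, 0 <= u i <= 1.

Definition vec1 (j : 'I_d) (u : R) : 'I_d -> R :=
  fun i => if i == j then u else 1.

Definition is_copula (C : ('I_d -> R) -> R) : Prop :=
  [/\ (forall u, unit_cube u -> (exists i, u i = 0) -> C u = 0),
      (forall (j : 'I_d) (u : R), 0 <= u <= 1 -> C (vec1 j u) = u) &
      (forall a b : 'I_d -> R, unit_cube a -> unit_cube b ->
         (forall i, a i <= b i) ->
         0 <= \sum_(S : {set 'I_d})
                (-1) ^+ #|~: S| * C (fun i => if i \in S then b i else a i))].

Definition lam (n : nat) (s t : R) : R :=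
  (Num.floor (n%:R * t) - Num.floor (n%:R * s))%:~R / n%:R.

Definition inDelta (s t : R) : Prop := 0 <= s /\ s <= t /\ t <= 1.

Definition classE (F : R -> R) : Prop :=
  [/\ (forall x, 0 <= x <= 1 -> 0 <= F x <= 1),
      (forall x y, 0 <= x -> x <= y -> y <= 1 -> F x <= F y),
      (forall x, 0 <= x < 1 -> forall e, 0 < e -> exists2 del, 0 < del &
         forall y, x <= y -> y < x + del -> y <= 1 -> `|F y - F x| < e),
      F 0 = 0 & F 1 = 1].

Definition classEstar (n : nat) (F : R -> R -> R -> R) : Prop :=
  forall s t, inDelta s t ->
    if (Num.floor (n%:R * s) < Num.floor (n%:R * t))%R
    then classE (fun u => (lam n s t)^-1 * F s t u)
    else (forall u, 0 <= u <= 1 -> F s t u = 0).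

Definition In_inv (n : nat) (F : R -> R -> R -> R) (s t u : R) : R :=
  inf [set v : R | 0 <= v <= 1 /\ lam n s t * u <= F s t v].

Definition Ustar (n : nat) (s t u : R) : R := lam n s t * u.

Definition marg (H : R -> R -> ('I_d -> R) -> R) (j : 'I_d) : R -> R -> R -> R :=
  fun s t u => H s t (vec1 j u).

Definition classEstar_d (n : nat) (H : R -> R -> ('I_d -> R) -> R) : Prop :=
  (forall s t u, inDelta s t -> unit_cube u -> 0 <= H s t u <= 1) /\
  (forall j, classEstar n (marg H j)).

Definition Cstar (C : ('I_d -> R) -> R) (n : nat) (s t : R) (u : 'I_d -> R) : R :=
  lam n s t * C u.

Definition classD (a : R -> R -> ('I_d -> R) -> R) : Prop :=
  [/\ (exists M, forall s t u, inDelta s t -> unit_cube u -> `|a s t u| <= M),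
      (forall s u, 0 <= s <= 1 -> unit_cube u -> a s s u = 0) &
      (forall s t u, inDelta s t -> s < t -> unit_cube u ->
         ((exists i, u i = 0) \/ (forall i, u i = 1)) -> a s t u = 0)].

Definition classDn (C : ('I_d -> R) -> R) (n : nat)
  (a : R -> R -> ('I_d -> R) -> R) : Prop :=
  classD a /\
  classEstar_d n (fun s t u => Cstar C n s t u + (Num.sqrt n%:R)^-1 * a s t u).

Definition cont_on_dom (a : R -> R -> ('I_d -> R) -> R) : Prop :=
  forall s t u, inDelta s t -> unit_cube u ->
  forall e, 0 < e -> exists2 del, 0 < del &
    forall s' t' u', inDelta s' t' -> unit_cube u' ->
      `|s - s'| < del -> `|t - t'| < del -> (forall i, `|u i - u' i| < del) ->
      `|a s t u - a s' t' u'| < e.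

Definition classD0 (a : R -> R -> ('I_d -> R) -> R) : Prop :=
  classD a /\ cont_on_dom a.

End Defs.

(* Main.v *)
Require Import Defs.
From HB Require Import structures.
From mathcomp Require Import all_boot all_order all_algebra.
From mathcomp Require Import boolp classical_sets reals.
From mathcomp Require Import all_classical all_reals all_analysis.
From mathcomp Require Import ring lra zify.
Import Order.TTheory GRing.Theory Num.Theory.
Import numFieldNormedType.Exports.
Local Open Scope ring_scope.
Set Implicit Arguments.
Unset Strict Implicit.

Definition I01 {R : realType} (x : R) := 0 <= x <= 1.

Local Open Scope classical_set_scope.
Lemma K_compact {R : realType} :
  compact [set x : R * R * R | I01 x.1.1 /\ I01 x.1.2 /\ I01 x.2].
Proof.
have -> : [set x : R * R * R | I01 x.1.1 /\ I01 x.1.2 /\ I01 x.2] =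
   (`[0, 1] `*` `[0, 1]) `*` `[0, 1].
  apply/seteqP; split => -[[a b] c] /=; rewrite /I01 /= !in_itv /=;
  by [move=> [-> [-> ->]] | move=> [[-> ->] ->]].
by apply: compact_setX; [apply: compact_setX|]; apply: segment_compact.
Qed.

Lemma UC {R : realType} (g : R -> R -> R -> R) :
 (forall a b c, I01 a -> I01 b -> I01 c -> forall e, 0 < e ->
    exists2 del, 0 < del & forall a' b' c', I01 a' -> I01 b' -> I01 c' ->
     `|a - a'| < del -> `|b - b'| < del -> `|c - c'| < del ->
     `|g a b c - g a' b' c'| < e) ->
 forall e, 0 < e -> exists2 del, 0 < del & forall a b c a' b' c',
   I01 a -> I01 b -> I01 c -> I01 a' -> I01 b' -> I01 c' ->
     `|a - a'| < del -> `|b - b'| < del -> `|c - c'| < del ->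
     `|g a b c - g a' b' c'| < e.
Proof.
move=> gc e e0.
set K := [set x : R * R * R | I01 x.1.1 /\ I01 x.1.2 /\ I01 x.2].
pose P (n : nat) (x : R * R * R) := forall y : R * R * R, K y ->
  `|x.1.1 - y.1.1| < n.+1%:R^-1 -> `|x.1.2 - y.1.2| < n.+1%:R^-1 ->
  `|x.2 - y.2| < n.+1%:R^-1 -> `|g x.1.1 x.1.2 x.2 - g y.1.1 y.1.2 y.2| < e.
have cov := (near_covering_withinP K).2 ((compact_near_coveringP K).1 (@K_compact R)).
have H : \forall n \near \oo, K `<=` P n.
  apply: cov => -[[a b] c] [/= Ia [Ib Ic]].
  have e20 : 0 < e / 2 by rewrite divr_gt0.
  have [del del0 Hdel] := gc a b c Ia Ib Ic _ e20.
  have d20 : 0 < del / 2 by rewrite divr_gt0.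
  near=> x n => Kx y Ky h1 h2 h3.
  have hx : `|a - x.1.1| < del / 2 /\ `|b - x.1.2| < del / 2 /\ `|c - x.2| < del / 2.
    near: x.
    apply: filterS (nbhsx_ballx (a, b, c) (del / 2) d20) => -[[x1 x2] x3].
    by rewrite /ball /= => -[[]]; rewrite /ball /=.
  have hn : n.+1%:R^-1 < del / 2.
    near: n; exact: (near_infty_natSinv_lt (PosNum d20)).
  case: hx => hx1 [hx2 hx3].
  case: Kx => Kx1 [Kx2 Kx3]; case: Ky => Ky1 [Ky2 Ky3].
  have tri (p q r : R) : `|p - q| < del / 2 -> `|q - r| < n.+1%:R^-1 -> `|p - r| < del.
    move=> H1 H2; rewrite (_ : p - r = (p - q) + (q - r)); last by rewrite addrA subrK.
    rewrite (le_lt_trans (ler_normD _ _)) //.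
    by rewrite [del]splitr ltrD // (lt_trans H2).
  rewrite (_ : g _ _ _ - _ = - (g a b c - g x.1.1 x.1.2 x.2) + (g a b c - g y.1.1 y.1.2 y.2)); last first.
    by rewrite opprB addrA subrK.
  rewrite (le_lt_trans (ler_normD _ _)) // normrN [e]splitr ltrD //.
    have hd : del / 2 < del by rewrite ltr_pdivrMr // ltr_pMr // ltr1n.
    by apply: Hdel => //; apply: lt_trans hd.
  by apply: Hdel => //; apply: tri; eauto.
have [n Pn] := filter_ex H.
exists n.+1%:R^-1; first by rewrite invr_gt0 ltr0n.
move=> a b c a' b' c' Ia Ib Ic Ia' Ib' Ic' h1 h2 h3.
exact: (Pn (a, b, c) (conj Ia (conj Ib Ic)) (a', b', c') (conj Ia' (conj Ib' Ic'))).
Unshelve. all: by end_near. Qed.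
Local Close Scope classical_set_scope.

Lemma vec1_cube {R : realType} d (j : 'I_d) (c : R) :
  0 <= c <= 1 -> unit_cube (vec1 j c).
Proof. by move=> hc i; rewrite /vec1; case: ifP => // _; rewrite ler01 lexx. Qed.

Lemma vec1_dist {R : realType} d (j : 'I_d) (c c' del : R) :
  0 < del -> `|c - c'| < del -> forall i, `|vec1 j c i - vec1 j c' i| < del.
Proof. by move=> ? ? i; rewrite /vec1; case: ifP => // _; rewrite subrr normr0. Qed.

Lemma min_dist {R : realType} (a b a' b' del : R) :
  `|a - a'| < del -> `|b - b'| < del ->
  `|Order.min a b - Order.min a' b'| < del.
Proof.
rewrite !ltr_distl => /andP[h1 h2] /andP[h3 h4].
by case: (leP a b) => h; case: (leP a' b') => h'; apply/andP; split; lra.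
Qed.

Lemma inDelta_min {R : realType} (a b : R) :
  I01 a -> I01 b -> inDelta (Order.min a b) b.
Proof.
rewrite /I01 /inDelta => /andP[a0 a1] /andP[b0 b1].
by case: (leP a b) => h; split => //; split => //; apply: ltW.
Qed.

Lemma beta_UC {R : realType} d (j : 'I_d) (alpha : R -> R -> ('I_d -> R) -> R) :
  cont_on_dom alpha -> forall e, 0 < e -> exists2 eta, 0 < eta &
  forall s t w s' t' w', inDelta s t -> inDelta s' t' -> 0 <= w <= 1 ->
    0 <= w' <= 1 -> `|s - s'| < eta -> `|t - t'| < eta -> `|w - w'| < eta ->
    `|alpha s t (vec1 j w) - alpha s' t' (vec1 j w')| < e.
Proof.
move=> hc e e0.
have [a b c Ia Ib Ic e' e'0|del del0 H] :=
  @UC R (fun a b c => alpha (Order.min a b) b (vec1 j c)) _ e e0.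
  have [del del0 Hd] := hc _ _ _ (@inDelta_min R a b Ia Ib) (@vec1_cube R d j c Ic) e' e'0.
  exists del => // a' b' c' Ia' Ib' Ic' h1 h2 h3.
  apply: Hd => //; first exact: (@inDelta_min R).
  - exact: (@vec1_cube R d).
  - exact: (@min_dist R).
  - exact: (@vec1_dist R d).
exists del => // s t w s' t' w' [s0 [st t1]] [s0' [st' t1']] w01 w01' h1 h2 h3.
have := H s t w s' t' w'.
rewrite /= (min_idPl st) (min_idPl st'); apply => //; rewrite /I01;
  apply/andP; split => //; lra.
Qed.

Lemma lam_ge0 {R : realType} n (s t : R) : s <= t -> 0 <= lam n s t.
Proof.
move=> st; rewrite /lam divr_ge0 ?ler0n // ler0z subr_ge0 le_floor //.
by rewrite ler_wpM2l.
Qed.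

Lemma lam_ss {R : realType} n (s : R) : lam n s s = 0.
Proof. by rewrite /lam subrr mul0r. Qed.

Lemma lam_gap {R : realType} n (s t : R) : (0 < n)%N ->
  t - s < lam n s t + n%:R^-1.
Proof.
move=> n0; have nR : (0 : R) < n%:R by rewrite ltr0n.
have nz : (n%:R : R) != 0 by rewrite gt_eqF.
rewrite /lam -(ltr_pM2r nR) [X in _ < X]mulrDl divfK // mulVf // intrB.
have h1 := floor_le (n%:R * s); have h2 := floorD1_gt (n%:R * t).
rewrite intrD in h2; lra.
Qed.

Lemma ar_lo_small {R : realType} (X Bu Ay By pd e1 : R) :
  - Ay - pd <= X -> - e1 < Bu -> By < e1 -> Ay - By <= e1 -> pd < e1 ->
  - (e1 * 4) <= X + Bu.
Proof. lra. Qed.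
Lemma ar_hi0 {R : realType} (X Bu e1 : R) :
  X <= 0 -> Bu < e1 -> 0 < e1 -> X + Bu <= e1 * 4.
Proof. lra. Qed.
Lemma ar_hi_small {R : realType} (X Bu Ay By pd e1 : R) :
  X < pd - Ay -> Bu < e1 -> - e1 < By -> - e1 <= Ay - By -> pd < e1 ->
  X + Bu <= e1 * 4.
Proof. lra. Qed.
Lemma ar_vulo {R : realType} (p eta vs u Ay By M e1 pd : R) :
  - Ay - pd <= p * (vs - u) -> By <= M -> Ay - By <= e1 ->
  M + e1 <= p * (eta / 8) -> pd <= p * (eta / 8) ->
  p * - (eta / 4) <= p * (vs - u).
Proof. lra. Qed.
Lemma ar_vuhi {R : realType} (p eta vs u Ay By M e1 pd : R) :
  p * (vs - u) < pd - Ay -> - M <= By -> - e1 <= Ay - By ->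
  M + e1 <= p * (eta / 8) -> pd <= p * (eta / 8) ->
  p * (vs - u) <= p * (eta / 4).
Proof. lra. Qed.
Lemma ar_close1 {R : realType} (y vs del eta u : R) :
  vs <= y -> y < vs + del -> del <= eta / 8 -> - (eta / 4) <= vs - u ->
  vs - u <= eta / 4 -> 0 < eta -> y - eta < u < y + eta.
Proof. move=> *; apply/andP; split; lra. Qed.
Lemma ar_close2 {R : realType} (y vs del eta u : R) :
  vs - del <= y -> y <= vs -> del <= eta / 8 -> - (eta / 4) <= vs - u ->
  vs - u <= eta / 4 -> 0 < eta -> y - eta < u < y + eta.
Proof. move=> *; apply/andP; split; lra. Qed.
Lemma ar_close3 {R : realType} (vs eta u : R) :
  vs = 0 -> - (eta / 4) <= vs - u -> 0 <= u -> 0 < eta -> 0 - eta < u < 0 + eta.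
Proof. move=> *; apply/andP; split; lra. Qed.
Lemma ar_lo_large {R : realType} (X Bu By Ay pd e1 : R) :
  - Ay - pd <= X -> - e1 < Bu - By -> Ay - By <= e1 -> pd < e1 -> 0 < e1 ->
  - (e1 * 4) <= X + Bu.
Proof. lra. Qed.
Lemma ar_hi_large {R : realType} (X Bu By Ay pd e1 : R) :
  X < pd - Ay -> Bu - By < e1 -> - e1 <= Ay - By -> pd < e1 -> 0 < e1 ->
  X + Bu <= e1 * 4.
Proof. lra. Qed.
Lemma ar1 {R : realType} (t s L n eta : R) :
  t - s < L + n -> L = 0 -> n < eta / 2 -> 0 < eta -> t - s < eta.
Proof. lra. Qed.
Lemma ar2 {R : realType} (e e1 : R) : e = e1 * 4 -> 0 < e1 -> e1 < e.
Proof. lra. Qed.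
Lemma ar3 {R : realType} (p del e1 : R) :
  del * (p + 1) <= e1 -> 0 < del -> p * del < e1.
Proof. lra. Qed.
Lemma ar4 {R : realType} (p y vs u del Ay : R) :
  p * (y - vs) <= p * del -> 0 <= p * (y - u) + Ay -> - Ay - p * del <= p * (vs - u).
Proof. lra. Qed.
Lemma ar5 {R : realType} (y vs del : R) : y < vs + del -> y - vs <= del.
Proof. lra. Qed.
Lemma ar6 {R : realType} (vs dd : R) : dd <= vs -> 0 < dd -> vs <= 1 -> 0 <= vs - dd <= 1.
Proof. move=> *; apply/andP; split; lra. Qed.
Lemma ar7 {R : realType} (vs dd : R) : vs <= vs - dd -> 0 < dd -> False.
Proof. lra. Qed.
Lemma ar8 {R : realType} (vs dd del : R) : dd <= del -> 0 < dd -> vs - del <= vs - dd <= vs.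
Proof. move=> *; apply/andP; split; lra. Qed.
Lemma ar9 {R : realType} (p vs dd del u Ay : R) :
  p * dd <= p * del -> p * (vs - dd - u) + Ay < 0 -> p * (vs - u) < p * del - Ay.
Proof. lra. Qed.
Unset Implicit Arguments.

Theorem lemmaB2 (R : realType) (d : nat) (C : ('I_d -> R) -> R)
  (alpha_n : nat -> R -> R -> ('I_d -> R) -> R)
  (alpha : R -> R -> ('I_d -> R) -> R) :
  is_copula C ->
  (forall n : nat, (0 < n)%N -> classDn C n (alpha_n n)) ->
  classD0 alpha ->
  (forall e : R, 0 < e -> exists N : nat, forall n : nat, (N <= n)%N ->
     forall s t (u : 'I_d -> R), inDelta s t -> unit_cube u ->
       `|alpha_n n s t u - alpha s t u| <= e) ->
  forall j : 'I_d,
  forall e : R, 0 < e -> exists N : nat, forall n : nat, (N <= n)%N ->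
    forall s t u : R, inDelta s t -> 0 <= u <= 1 ->
      `| Num.sqrt n%:R * lam n s t *
           (In_inv n (fun s' t' u' => Ustar n s' t' u'
                        + (Num.sqrt n%:R)^-1 * marg (alpha_n n) j s' t' u') s t u - u)
         + marg alpha j s t u | <= e.
Proof.
move=> _ HDn [[[M HM] Hss Hbd] Hcont] Hconv j e e0.
pose e1 := e / 4.
have e10 : 0 < e1 by rewrite divr_gt0.
have he : e = e1 * 4 by rewrite /e1 divfK // pnatr_eq0.
have [eta eta0 Heta] := @beta_UC R d j alpha Hcont e1 e10.
have M0 : 0 <= M.
  have h00 : inDelta (0 : R) 0 by split; [|split]; rewrite ?lexx ?ler01.
  have := HM 0 0 (vec1 j 0) h00 (@vec1_cube R d j 0 _).
  by rewrite lexx ler01 => /(_ isT); apply: le_trans.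
have [N1 HN1] := Hconv e1 e10.
pose c := 16 * (M + e1) / (eta * eta).
have c0 : 0 <= c by rewrite /c divr_ge0 ?mulr_ge0 ?addr_ge0 // ltW.
pose N2 := (Num.trunc (2 / eta)).+1.
pose N3 := (Num.trunc (c ^+ 2)).+1.
exists (N1 + N2 + N3)%N => n hn s t u hst hu.
have hN1 : (N1 <= n)%N by lia.
have hN2 : (N2 <= n)%N by lia.
have hN3 : (N3 <= n)%N by lia.
have n0 : (0 < n)%N by lia.
have nR : (0 : R) < n%:R by rewrite ltr0n.
have hinvn : n%:R^-1 < eta / 2.
  have h1 := truncnS_gt (2 / eta).
  have h2 : (N2%:R : R) <= n%:R by rewrite ler_nat.
  rewrite -/N2 ltr_pdivrMr // in h1.
  rewrite -(ltr_pM2l nR) mulfV ?gt_eqF //.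
  nra.
pose r := Num.sqrt (n%:R : R).
have r0 : 0 < r by rewrite /r sqrtr_gt0.
have hsq : c <= r.
  rewrite -(ger0_norm c0) -sqrtr_sqr /r ler_wsqrtr //.
  have h1 := truncnS_gt (c ^+ 2).
  have h2 : (N3%:R : R) <= n%:R by rewrite ler_nat.
  rewrite -/N3 in h1; apply: ltW; exact: lt_le_trans h1 h2.
rewrite -/r /marg.
pose L := lam n s t.
rewrite -/L.
have [s0 [st0 t1]] := hst.
have L0 : 0 <= L := @lam_ge0 R n s t st0.
have gap := @lam_gap R n s t n0.
rewrite -/L in gap.
pose B w := alpha s t (vec1 j w).
pose A w := alpha_n n s t (vec1 j w).
change (alpha s t (vec1 j u)) with (B u).
have cube w : 0 <= w <= 1 -> unit_cube (vec1 j w) := @vec1_cube R d j w.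
have hAB w : 0 <= w <= 1 -> `|A w - B w| <= e1.
  by move=> hw; apply: HN1 => //; apply: cube.
have hBM w : 0 <= w <= 1 -> `|B w| <= M.
  by move=> hw; apply: HM => //; apply: cube.
have Hsmall : t - s < eta -> forall w, 0 <= w <= 1 -> `|B w| < e1.
  move=> h w hw.
  have hss : inDelta s s by split; [|split]; rewrite ?lexx //; apply: le_trans t1.
  have ht : `|t - s| < eta by rewrite ger0_norm // subr_ge0.
  have := Heta s t w s s w hst hss hw hw ltac:(by rewrite subrr normr0) ht
    ltac:(by rewrite subrr normr0).
  by rewrite /B (Hss s) ?subr0 //; [apply/andP; split => //; apply: le_trans t1|apply: cube].
case: (eqVneq L 0) => [L_eq|Lne].
  rewrite L_eq mulr0 mul0r add0r; apply: ltW; apply: (lt_trans (Hsmall _ _ hu)).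
    exact: (ar1 gap L_eq hinvn eta0).
  exact: (ar2 he e10).
have Lpos : 0 < L by rewrite lt_def Lne.
have st : s < t.
  rewrite lt_neqAle st0 andbT; apply/eqP => est; move: Lne.
  by rewrite /L est lam_ss eqxx.
have [[_ _ HbdN] _] := HDn n n0.
pose S := fun v : R => (0 <= v <= 1) /\ (L * u <= L * v + r^-1 * alpha_n n s t (vec1 j v)).
have -> : In_inv n (fun s' t' u' => Ustar n s' t' u'
                        + r^-1 * marg (alpha_n n) j s' t' u') s t u = inf S.
  by [].
pose p := r * L.
have p0 : 0 < p by rewrite mulr_gt0.
have key v : (L * u <= L * v + r^-1 * A v) = (0 <= p * (v - u) + A v).
  rewrite -subr_ge0 (_ : L * v + r^-1 * A v - L * u = r^-1 * (p * (v - u) + A v)).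
    by rewrite pmulr_rge0 // invr_gt0.
  by rewrite /p; field; rewrite gt_eqF.
have A1 : A 1 = 0.
  apply: HbdN => //; first by apply: cube; rewrite ler01 lexx.
  by right => i; rewrite /vec1; case: ifP.
have memS v : S v = ((0 <= v <= 1) /\ (0 <= p * (v - u) + A v)).
  by rewrite /S -key.
have S1 : S 1.
  rewrite memS A1 addr0 ler01 lexx; split => //.
  by apply: mulr_ge0; [apply: ltW | rewrite subr_ge0; case/andP: hu].
have S0 : (S !=set0)%classic by exists 1.
have lbS : lbound S 0 by move=> v; rewrite memS => -[/andP[]].
have hlb : has_lbound S by exists 0.
have hinf : has_inf S by split.
pose vs := inf S.
have vs0 : 0 <= vs := lb_le_inf S0 lbS.
have vsy y : S y -> vs <= y := fun Sy => ge_inf hlb Sy.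
have vs1 : vs <= 1 := vsy 1 S1.
pose del := Order.min (eta / 8) (e1 / (p + 1)).
have del0 : 0 < del by rewrite lt_min !divr_gt0 // addr_gt0.
have delE : del <= eta / 8 by rewrite ge_min lexx.
have pdel : p * del < e1.
  have h : del <= e1 / (p + 1) by rewrite ge_min lexx orbT.
  rewrite ler_pdivlMr ?addr_gt0 // in h.
  exact: (ar3 h del0).
have [y Sy yl] := inf_adherent del0 hinf.
have vy := vsy y Sy.
move: (Sy); rewrite memS => -[/andP[y0 y1] hy].
have Lo : p * (vs - u) >= - A y - p * del.
  have h : p * (y - vs) <= p * del by rewrite ler_pM2l //; exact: ar5.
  exact: (ar4 h hy).
have Up : vs = 0 /\ p * (vs - u) <= 0 \/
          exists y', [/\ 0 <= y' <= 1, vs - del <= y' <= vs &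
                       p * (vs - u) < p * del - A y'].
  case: (eqVneq vs 0) => [vsE|vsne]; [left|right].
    split => //; rewrite vsE sub0r mulrN oppr_le0.
    by apply: mulr_ge0; [apply: ltW | case/andP: hu].
  have vsp : 0 < vs by rewrite lt_def vsne.
  pose dd := Order.min vs del.
  have dd0 : 0 < dd by rewrite lt_min vsp.
  have ddv : dd <= vs by rewrite ge_min lexx.
  have ddd : dd <= del by rewrite ge_min lexx orbT.
  exists (vs - dd).
  have h01 : 0 <= vs - dd <= 1 := ar6 ddv dd0 vs1.
  have nS : ~ S (vs - dd) by move/vsy => h; exact: (ar7 h dd0).
  have hA : p * (vs - dd - u) + A (vs - dd) < 0.
    by rewrite ltNge; apply/negP => h; apply: nS; rewrite memS.
  split => //; first exact: (ar8 vs ddd dd0).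
  have h : p * dd <= p * del by rewrite ler_pM2l.
  exact: (ar9 h hA).
rewrite -/p -/vs he.
have nb w : 0 <= w <= 1 -> - e1 <= A w - B w <= e1.
  by move=> hw; rewrite -ler_norml; apply: hAB.
have hu0 : 0 <= u by case/andP: hu.
have hy01 : 0 <= y <= 1 by apply/andP.
have [nbl nbh] := andP (nb y hy01).
rewrite ler_norml; apply/andP.
case: (ltP L (eta / 2)) => hL.
  have hts : t - s < eta.
    by apply: lt_le_trans gap _; rewrite [X in _ <= X]splitr lerD // ltW.
  have sb w : 0 <= w <= 1 -> - e1 < B w < e1.
    by move=> hw; rewrite -ltr_norml; apply: Hsmall.
  have [sbl sbh] := andP (sb y hy01).
  have [sul suh] := andP (sb u hu).
  split.
  exact: (ar_lo_small Lo sul sbh nbh pdel).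
  case: Up => [[_ h]|[y' [hy' _ h]]]; first exact: ar_hi0 h suh e10.
  have [nbl' nbh'] := andP (nb y' hy'); have [sbl' sbh'] := andP (sb y' hy').
  exact: (ar_hi_small h suh sbl' nbl' pdel).
have hpM : M + e1 <= p * (eta / 8).
  have h1 : c * (eta / 2) <= r * L.
    by apply: ler_pM => //; apply: divr_ge0 => //; apply: ltW.
  have h2 : c * (eta / 2) * (eta / 8) = M + e1.
    by rewrite /c; field; rewrite gt_eqF.
  rewrite -h2 /p; apply: ler_wpM2r => //.
  by apply: divr_ge0 => //; apply: ltW.
have bM w : 0 <= w <= 1 -> - M <= B w <= M.
  by move=> hw; rewrite -ler_norml; apply: hBM.
have pdel8 : p * del <= p * (eta / 8) by rewrite ler_pM2l.
have close w : 0 <= w <= 1 -> `|u - w| < eta -> - e1 < B u - B w < e1.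
  by move=> hw huw; rewrite -ltr_norml; apply: Heta => //; rewrite subrr normr0.
have [bMl bMh] := andP (bM y hy01).
have vu_lo : - (eta / 4) <= vs - u.
  by rewrite -(ler_pM2l p0); apply: (ar_vulo Lo bMh nbh hpM pdel8).
have vu_hi : vs - u <= eta / 4.
  case: Up => [[vsE _]|[y' [hy' _ h]]].
    rewrite vsE sub0r; apply: (@le_trans _ _ 0); first by rewrite oppr_le0.
    by apply: divr_ge0 => //; apply: ltW.
  rewrite -(ler_pM2l p0).
  have [nbl' nbh'] := andP (nb y' hy'); have [bMl' bMh'] := andP (bM y' hy').
  exact: (ar_vuhi h bMl' nbl' hpM pdel8).
have [cl ch] := andP (close y hy01
   ltac:(by rewrite ltr_distl; apply: (ar_close1 vy yl delE vu_lo vu_hi eta0))).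
split; first exact: (ar_lo_large Lo cl nbh pdel e10).
case: Up => [[vsE h]|[y' [hy' /andP[hy1 hy2] h]]].
  have B0 : B 0 = 0.
    apply: Hbd => //; first by apply: cube; rewrite lexx ler01.
    by left; exists j; rewrite /vec1 eqxx.
  have h0 : 0 <= (0:R) <= 1 by rewrite lexx ler01.
  have [cl0 ch0] := andP (close 0 h0
     ltac:(by rewrite ltr_distl; apply: (ar_close3 vsE vu_lo hu0 eta0))).
  rewrite B0 subr0 in ch0.
  exact: ar_hi0 h ch0 e10.
have [nbl' nbh'] := andP (nb y' hy').
have [cl' ch'] := andP (close y' hy'
   ltac:(by rewrite ltr_distl; apply: (ar_close2 hy1 hy2 delE vu_lo vu_hi eta0))).
exact: (ar_hi_large h ch' nbl' pdel e10).
Qed.
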